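(* Let $Q=ABCD$ be a non-degenerate parallelogram of perimeter $2$ and $Q^\circ=KLMN$ its dual. Then $|KL|=|BC|$, $|LM|=|AB|$, $|KM|=|AC|$, and $Q^\circ$ is a parallelogram congruent to $Q$ (parallelograms are self-dual up to isometry).
   Context: Identify $\mathbb{R}^2$ with $\mathbb{C}$. A quadrangle $Q=ABCD$ is an ordered 4-tuple of points $A,B,C,D\in\mathbb{C}$: $A$ is the first vertex and the order $A\to B\to C\to D\to A$ is the direction of traversal. Its edge vectors are $z_1=B-A$, $z_2=C-B$, $z_3=D-C$, $z_4=A-D$, so $z_1+z_2+z_3+z_4=0$; its perimeter is $|z_1|+|z_2|+|z_3|+|z_4|$. $Q$ is non-degenerate if each pair of consecutive edge vectors $(z_1,z_2),(z_2,z_3),(z_3,z_4),(z_4,z_1)$ consists of nonzero, non-collinear vectors. Associated plane: for a non-degenerate $Q$ of perimeter $2$, choose $u_1,\dots,u_4\in\mathbb{C}$ with $u_k^2=z_k$, where $u_1$ is an arbitrary square root of $z_1$ and for $k=1,2,3$ the sign of $u_{k+1}$ is chosen so that $\operatorname{Im}(\overline{u_k}u_{k+1})$ has the same sign as $\operatorname{Im}(\overline{z_k}z_{k+1})$. Write $u_k=a_k+i b_k$ and $\bar a=(a_1,a_2,a_3,a_4)$, $\bar b=(b_1,b_2,b_3,b_4)$; these are orthonormal in $\mathbb{R}^4$. Let $\Pi=\operatorname{span}(\bar a,\bar b)$ and $\Pi^\perp$ its orthogonal complement. Dual quadrangle: choose an orthonormal basis $(\bar c,\bar d)$ of $\Pi^\perp$,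 put $w_k=(c_k+i d_k)^2$; then $\sum_k w_k=0$ and $\sum_k|w_k|=2$. The dual quadrangle $Q^\circ=KLMN$ is the quadrangle with $L-K=w_1$, $M-L=w_2$, $N-M=w_3$, $K-N=w_4$. It is determined up to rotation, reflection and translation. *)

(* Defs.v *)
From Stdlib Require Import Reals.
Open Scope R_scope.

(* A point / complex number x + i y is the pair (x, y). *)
Definition pt := (R * R)%type.
Definition re (p : pt) : R := fst p.
Definition im (p : pt) : R := snd p.
Definition psub (p q : pt) : pt := (fst p - fst q, snd p - snd q).
Definition padd (p q : pt) : pt := (fst p + fst q, snd p + snd q).
Definition cabs (p : pt) : R := sqrt (fst p * fst p + snd p * snd p).
Definition cmul (p q : pt) : pt :=
  (fst p * fst q - snd p * snd q, fst p * snd q + snd p * fst q).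
Definition csq (p : pt) : pt := cmul p p.
Definition imconjmul (p q : pt) : R := fst p * snd q - snd p * fst q.

Definition good_pair (p q : pt) : Prop :=
  p <> (0, 0) /\ q <> (0, 0) /\ imconjmul p q <> 0.

Definition nondegenerate (A B C D : pt) : Prop :=
  let z1 := psub B A in let z2 := psub C B in
  let z3 := psub D C in let z4 := psub A D in
  good_pair z1 z2 /\ good_pair z2 z3 /\ good_pair z3 z4 /\ good_pair z4 z1.

Definition perimeter (A B C D : pt) : R :=
  cabs (psub B A) + cabs (psub C B) + cabs (psub D C) + cabs (psub A D).

Definition parallelogram (A B C D : pt) : Prop := psub B A = psub C D.

Definition same_sign (x y : R) : Prop := (0 < x /\ 0 < y) \/ (x < 0 /\ y < 0).

Definition dot4 (x1 x2 x3 x4 y1 y2 y3 y4 : R) : R :=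
  x1 * y1 + x2 * y2 + x3 * y3 + x4 * y4.

Definition admissible_roots (A B C D u1 u2 u3 u4 : pt) : Prop :=
  let z1 := psub B A in let z2 := psub C B in
  let z3 := psub D C in let z4 := psub A D in
  csq u1 = z1 /\ csq u2 = z2 /\ csq u3 = z3 /\ csq u4 = z4 /\
  same_sign (imconjmul u1 u2) (imconjmul z1 z2) /\
  same_sign (imconjmul u2 u3) (imconjmul z2 z3) /\
  same_sign (imconjmul u3 u4) (imconjmul z3 z4).

(* v_k = c_k + i d_k where (c, d) is an orthonormal basis of Pi^perp,
   Pi = span(a, b), u_k = a_k + i b_k.  (Pi^perp is 2-dimensional since
   a, b are orthonormal, so an orthonormal pair in Pi^perp is a basis.) *)
Definition orthonormal_basis_perp (u1 u2 u3 u4 v1 v2 v3 v4 : pt) : Prop :=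
  let c1 := re v1 in let c2 := re v2 in let c3 := re v3 in let c4 := re v4 in
  let d1 := im v1 in let d2 := im v2 in let d3 := im v3 in let d4 := im v4 in
  let a1 := re u1 in let a2 := re u2 in let a3 := re u3 in let a4 := re u4 in
  let b1 := im u1 in let b2 := im u2 in let b3 := im u3 in let b4 := im u4 in
  dot4 c1 c2 c3 c4 c1 c2 c3 c4 = 1 /\
  dot4 d1 d2 d3 d4 d1 d2 d3 d4 = 1 /\
  dot4 c1 c2 c3 c4 d1 d2 d3 d4 = 0 /\
  dot4 c1 c2 c3 c4 a1 a2 a3 a4 = 0 /\
  dot4 c1 c2 c3 c4 b1 b2 b3 b4 = 0 /\
  dot4 d1 d2 d3 d4 a1 a2 a3 a4 = 0 /\
  dot4 d1 d2 d3 d4 b1 b2 b3 b4 = 0.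

Definition dual_quadrangle (A B C D K L M N : pt) : Prop :=
  exists u1 u2 u3 u4 v1 v2 v3 v4 : pt,
    admissible_roots A B C D u1 u2 u3 u4 /\
    orthonormal_basis_perp u1 u2 u3 u4 v1 v2 v3 v4 /\
    psub L K = csq v1 /\ psub M L = csq v2 /\
    psub N M = csq v3 /\ psub K N = csq v4.

Definition pdist (p q : pt) : R := cabs (psub p q).

Definition isometry (f : pt -> pt) : Prop :=
  forall p q, pdist (f p) (f q) = pdist p q.

(* Main.v *)
Require Import Defs.
From Stdlib Require Import Reals Nsatz Lra.
Open Scope R_scope.

Lemma sq0 (x y : R) : x^2 + y^2 = 0 -> x = 0 /\ y = 0.
Proof. intros H. assert (0 <= x*x) by apply Rle_0_sqr. assert (0 <= y*y) by apply Rle_0_sqr.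
  assert (Hx: x*x = 0) by (simpl in H; lra). assert (Hy: y*y = 0) by (simpl in H; lra).
  split; [destruct (Rmult_integral _ _ Hx)|destruct (Rmult_integral _ _ Hy)]; auto. Qed.

Lemma unit_perp (m1 m2 n1 n2 : R) :
  m1*m1+m2*m2 = 1 -> n1*n1+n2*n2 = 1 -> m1*n1+m2*n2 = 0 ->
  exists s, s*s = 1 /\ n1 = -s*m2 /\ n2 = s*m1.
Proof.
  intros H1 H2 H3.
  set (k := n1*m2 - n2*m1).
  assert (Hk : k*k = 1).
  { replace (k*k) with ((m1*m1+m2*m2)*(n1*n1+n2*n2) - (m1*n1+m2*n2)^2) by (unfold k; ring).
    rewrite H1, H2, H3. ring. }
  assert (Hk2: (k-1)*(k+1) = 0) by nra.
  destruct (Rmult_integral _ _ Hk2) as [E|E].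
  - exists (-1). assert (E2: (n1-m2)^2+(n2+m1)^2 = 0).
    { replace ((n1-m2)^2+(n2+m1)^2) with ((n1*n1+n2*n2)+(m1*m1+m2*m2) - 2*k) by (unfold k; ring). lra. }
    destruct (sq0 _ _ E2).
    split; [ring|split; lra].
  - exists 1. assert (E2: (n1+m2)^2+(n2-m1)^2 = 0).
    { replace ((n1+m2)^2+(n2-m1)^2) with ((n1*n1+n2*n2)+(m1*m1+m2*m2) + 2*k) by (unfold k; ring). lra. }
    destruct (sq0 _ _ E2).
    split; [ring|split; lra].
Qed.

Lemma core (a1 b1 a2 b2 e c1 c2 c3 c4 d1 d2 d3 d4 : R) :
  a1*a1+b1*b1+a2*a2+b2*b2 = 1 -> e*e = 1 ->
  c1*c1+c2*c2+c3*c3+c4*c4 = 1 ->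
  d1*d1+d2*d2+d3*d3+d4*d4 = 1 ->
  c1*d1+c2*d2+c3*d3+c4*d4 = 0 ->
  c1*a1+c2*a2+c3*(-e*b1)+c4*(-e*b2) = 0 ->
  c1*b1+c2*b2+c3*(e*a1)+c4*(e*a2) = 0 ->
  d1*a1+d2*a2+d3*(-e*b1)+d4*(-e*b2) = 0 ->
  d1*b1+d2*b2+d3*(e*a1)+d4*(e*a2) = 0 ->
  exists m1 m2 s, m1*m1+m2*m2 = 1 /\ s*s = 1 /\
   let X := m1*a2 - m2*b2 in let Y := m1*b2 + m2*a2 in
   let U := m1*a1 - m2*b1 in let V := m1*b1 + m2*a1 in
   c1 = -X /\ d1 = s*Y /\ c2 = U /\ d2 = -s*V /\
   c3 = -e*Y /\ d3 = -e*s*X /\ c4 = e*V /\ d4 = e*s*U.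
Proof.
  intros HN He Hc Hd Hcd Hca Hcb Hda Hdb.
  set (m1 := c2*a1 + e*c4*b1 - (c1*a2 + e*c3*b2)).
  set (m2 := e*c4*a1 - c2*b1 - (e*c3*a2 - c1*b2)).
  set (n1 := d2*a1 + e*d4*b1 - (d1*a2 + e*d3*b2)).
  set (n2 := e*d4*a1 - d2*b1 - (e*d3*a2 - d1*b2)).
  assert (E1: c1 = -(m1*a2 - m2*b2)) by (unfold m1, m2; nsatz).
  assert (E2: c2 = m1*a1 - m2*b1) by (unfold m1, m2; nsatz).
  assert (E3: c3 = -e*(m1*b2 + m2*a2)) by (unfold m1, m2; nsatz).
  assert (E4: c4 = e*(m1*b1 + m2*a1)) by (unfold m1, m2; nsatz).
  assert (F1: d1 = -(n1*a2 - n2*b2)) by (unfold n1, n2; nsatz).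
  assert (F2: d2 = n1*a1 - n2*b1) by (unfold n1, n2; nsatz).
  assert (F3: d3 = -e*(n1*b2 + n2*a2)) by (unfold n1, n2; nsatz).
  assert (F4: d4 = e*(n1*b1 + n2*a1)) by (unfold n1, n2; nsatz).
  clearbody m1 m2 n1 n2.
  assert (Hm: m1*m1+m2*m2 = 1) by (subst; nsatz).
  assert (Hn: n1*n1+n2*n2 = 1) by (subst; nsatz).
  assert (Hmn: m1*n1+m2*n2 = 0) by (subst; nsatz).
  destruct (unit_perp _ _ _ _ Hm Hn Hmn) as (s & Hs & G1 & G2).
  exists m1, m2, s. split; [exact Hm|split;[exact Hs|]].
  cbv zeta. subst. repeat split; ring.
Qed.

Lemma root_pm (a1 b1 a3 b3 : R) :
  a3*a3 - b3*b3 = -(a1*a1-b1*b1) -> a3*b3+b3*a3 = -(a1*b1+b1*a1) ->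
  (a3 = -b1 /\ b3 = a1) \/ (a3 = b1 /\ b3 = -a1).
Proof.
  intros H1 H2.
  assert (HP : ((a3+b1)^2+(b3-a1)^2)*((a3-b1)^2+(b3+a1)^2) = 0).
  { replace (((a3+b1)^2+(b3-a1)^2)*((a3-b1)^2+(b3+a1)^2)) with
      ((a3*a3 - b3*b3 + (a1*a1-b1*b1))^2 + (a3*b3+b3*a3 + (a1*b1+b1*a1))^2) by ring.
    assert (E1: a3*a3 - b3*b3 + (a1*a1-b1*b1) = 0) by lra.
    assert (E2: a3*b3+b3*a3 + (a1*b1+b1*a1) = 0) by lra. rewrite E1, E2. ring. }
  destruct (Rmult_integral _ _ HP) as [E|E]; destruct (sq0 _ _ E).
  - left; split; lra.
  - right; split; lra.
Qed.

Lemma cabs_csq (u : pt) : cabs (csq u) = fst u * fst u + snd u * snd u.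
Proof.
  destruct u as [a b]. unfold cabs, csq, cmul; simpl.
  replace ((a*a - b*b)*(a*a-b*b) + (a*b+b*a)*(a*b+b*a)) with ((a*a+b*b)*(a*a+b*b)) by ring.
  apply sqrt_square. nra.
Qed.

Theorem theorem8p2 (A B C D K L M N : pt) :
  nondegenerate A B C D ->
  perimeter A B C D = 2 ->
  parallelogram A B C D ->
  dual_quadrangle A B C D K L M N ->
  pdist K L = pdist B C /\ pdist L M = pdist A B /\ pdist K M = pdist A C /\
  parallelogram K L M N /\
  (exists f : pt -> pt, isometry f /\
     f K = C /\ f L = B /\ f M = A /\ f N = D).
Proof.
  intros _ Hper Hpar Hdual.
  destruct Hdual as (u1&u2&u3&u4&v1&v2&v3&v4&Hadm&Horth&HL&HM&HN&HK).
  destruct Hadm as (H1&H2&H3&H4&S1&S2&S3).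
  unfold perimeter in Hper. rewrite <- H1, <- H2, <- H3, <- H4, !cabs_csq in Hper.
  destruct A as [xa ya], B as [xb yb], C as [xc yc], D as [xd yd],
    K as [xk yk], L as [xl yl], M as [xm ym], N as [xn yn].
  destruct u1 as [a1 b1], u2 as [a2 b2], u3 as [a3 b3], u4 as [a4 b4].
  destruct v1 as [c1 d1], v2 as [c2 d2], v3 as [c3 d3], v4 as [c4 d4].
  unfold csq, cmul, psub, parallelogram, imconjmul, orthonormal_basis_perp,
    dot4, re, im in *; simpl in *.
  injection H1 as H1a H1b. injection H2 as H2a H2b.
  injection H3 as H3a H3b. injection H4 as H4a H4b.
  injection Hpar as P1 P2.
  injection HL as L1 L2. injection HM as M1 M2. injection HN as N1 N2. injection HK as K1 K2.
  assert (xd = xc - xb + xa) by lra. subst xd.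
  assert (yd = yc - yb + ya) by lra. subst yd.
  assert (Hroots : exists e, e*e = 1 /\ a3 = -e*b1 /\ b3 = e*a1 /\ a4 = -e*b2 /\ b4 = e*a2).
  { destruct (root_pm a1 b1 a3 b3) as [[E1 E2]|[E1 E2]]; try lra;
    destruct (root_pm a2 b2 a4 b4) as [[F1 F2]|[F1 F2]]; try lra;
    subst a3 b3 a4 b4.
    - exists 1. repeat split; ring.
    - exfalso. unfold same_sign in *.
      destruct S1 as [[P Q]|[P Q]]; destruct S3 as [[P' Q']|[P' Q']]; nra.
    - exfalso. unfold same_sign in *.
      destruct S1 as [[P Q]|[P Q]]; destruct S3 as [[P' Q']|[P' Q']]; nra.
    - exists (-1). repeat split; ring. }
  destruct Hroots as (e & He & E1 & E2 & E3 & E4). subst a3 b3 a4 b4.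
  assert (HN1 : a1*a1+b1*b1+a2*a2+b2*b2 = 1) by (clear - Hper He; nsatz).
  destruct Horth as (O1&O2&O3&O4&O5&O6&O7).
  destruct (core a1 b1 a2 b2 e c1 c2 c3 c4 d1 d2 d3 d4 HN1 He O1 O2 O3 O4 O5 O6 O7)
    as (m1 & m2 & s & Hm & Hs & HH).
  cbv zeta in HH. destruct HH as (G1&G2&G3&G4&G5&G6&G7&G8).
  subst c1 d1 c2 d2 c3 d3 c4 d4.
  clear O1 O2 O3 O4 O5 O6 O7 S1 S2 S3 H3a H3b H4a H4b HN1 Hper.
  split; [|split; [|split; [|split]]].
  - unfold pdist, cabs, psub; simpl. f_equal. clear - L1 L2 H2a H2b Hs Hm. nsatz.
  - unfold pdist, cabs, psub; simpl. f_equal. clear - M1 M2 H1a H1b Hs Hm. nsatz.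
  - unfold pdist, cabs, psub; simpl. f_equal. clear - L1 L2 M1 M2 H1a H1b H2a H2b Hs Hm. nsatz.
  - unfold psub; simpl. apply f_equal2; clear - L1 L2 N1 N2 He Hs; nsatz.
  - exists (fun p : pt =>
      let r1 := m1*m1 - m2*m2 in let r2 := 2*m1*m2 in
      let w1 := fst p - xk in let w2 := - s * (snd p - yk) in
      (xc - (r1*w1 + r2*w2), yc - (r1*w2 - r2*w1))).
    split; [|split; [|split; [|split]]].
    + intros [p1 p2] [q1 q2]. unfold pdist, cabs, psub; simpl. f_equal. clear - Hs Hm. nsatz.
    + simpl. f_equal; ring.
    + simpl. f_equal; clear - L1 L2 H2a H2b Hs Hm; nsatz.
    + simpl. f_equal; clear - L1 L2 M1 M2 H1a H1b H2a H2b Hs Hm; nsatz.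
    + simpl. f_equal; clear - K1 K2 H1a H1b He Hs Hm; nsatz.
Qed.
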